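(* Let $(\varepsilon_n)_n$ be a sequence of positive real numbers and $(\mathcal X_n)_n$ a sequence of m2m spaces $\mathcal X_n=(X_n,r_n,\nu_n)$ with $d_{2GP}(\mathcal X_n,\mathcal X_{n+1})<\varepsilon_n$ for every $n\in\mathbb N$. Then there are a complete separable metric space $(Z,r_Z)$ and isometric embeddings $\iota_n:X_n\to Z$, $n\in\mathbb N$, such that $d_P^{\mathcal M_f(Z)}(\iota_{n**}\nu_n,\iota_{n+1**}\nu_{n+1})<\varepsilon_n$ for all $n\in\mathbb N$.
   Context: For a Polish space $X$, $\mathcal M_f(X)$ is the set of finite Borel measures; $M_\nu(A)=\int\mu(A)\,d\nu(\mu)$; for measurable $g$, $g_*\mu=\mu\circ g^{-1}$, $g_{**}\nu=\nu\circ(g_* )^{-1}$. An m2m space is $(X,r,\nu)$, $X\subset\mathbb R^{\mathbb N}$ non-empty, $(X,r)$ complete separable metric, $\nu\in\mathcal M_f(\mathcal M_f(X))$; equivalence via measurable maps isometric on $\operatorname{supp}M_\nu$ with $\lambda=f_{**}\nu$. Prokhorov distance for finite measures on a metric space $(S,\rho)$: $d_P^S(\mu,\eta)=\inf\{\varepsilon>0:\mu(A)\le\eta(A^\varepsilon)+\varepsilon,\eta(A)\le\mu(A^\varepsilon)+\varepsilon\ \forall A\text{ closed}\}$, $A^\varepsilon$ the open $\varepsilon$-neighbourhood; $d_P^{\mathcal M_f(Z)}$ is the Prokhorov metric on finite measures on $(\mathcal M_f(Z),d_P^Z)$. $d_{2GP}((X,r,\nu),(Y,d,\lambda))=\inf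 d_P^{\mathcal M_f(Z)}(\iota_{X**}\nu,\iota_{Y**}\lambda)$ over complete separable metric spaces $Z$ and isometric embeddings $\iota_X:X\to Z,\iota_Y:Y\to Z$. *)

(* Defs.v *)
From HB Require Import structures.
From mathcomp Require Import all_boot all_order all_algebra.
From mathcomp Require Import all_classical all_reals.
From mathcomp Require Import topology normedtype sequences measure.
Set Implicit Arguments. Unset Strict Implicit. Unset Printing Implicit Defensive.
Import Order.TTheory GRing.Theory Num.Theory.
Import numFieldNormedType.Exports.
Local Open Scope classical_set_scope.
Local Open Scope ring_scope.

Section MetricNotions.
Context {R : realType} {T : Type} (d : T -> T -> R).

Definition is_metric : Prop :=
  [/\ (forall x y, d x y = 0 <-> x = y),
      (forall x y, d x y = d y x) &
      (forall x y z, d x z <= d x y + d y z)].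

Definition mball (x : T) (e : R) : set T := [set y | d x y < e].
Definition mopen (A : set T) : Prop :=
  forall x, A x -> exists e : R, 0 < e /\ mball x e `<=` A.
Definition mclosed (A : set T) : Prop := mopen (~` A).
Definition mnbhd (A : set T) (e : R) : set T :=
  [set y | exists2 x, A x & d x y < e].

Definition mborel (A : set T) : Prop := <<s mopen >> A.

Definition mcauchy (u : nat -> T) : Prop :=
  forall e : R, 0 < e -> exists N, forall m n, (N <= m)%N -> (N <= n)%N ->
    d (u m) (u n) < e.
Definition mconverges (u : nat -> T) (l : T) : Prop :=
  forall e : R, 0 < e -> exists N, forall n, (N <= n)%N -> d (u n) l < e.
Definition mcomplete : Prop :=
  forall u, mcauchy u -> exists l, mconverges u l.
Definition mseparable : Prop :=
  exists D : set T, countable D /\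
    forall x (e : R), 0 < e -> exists2 y, D y & d x y < e.

(* finite Borel measure, represented as a real-valued set function which is
   a (countably additive, nonnegative) measure on Borel sets and 0 off them *)
Definition is_fmeasure (mu : set T -> R) : Prop :=
  [/\ (forall A, ~ mborel A -> mu A = 0),
      mu set0 = 0,
      (forall A, mborel A -> 0 <= mu A) &
      (forall F : nat -> set T, (forall n, mborel (F n)) -> trivIset setT F ->
         (fun n => \sum_(0 <= i < n) mu (F i)) @ \oo --> mu (\bigcup_n F n))].

Definition mf := {mu : set T -> R | is_fmeasure mu}.

Definition prokhorov_ok (mu eta : set T -> R) (e : R) : Prop :=
  forall A, mclosed A ->
    mu A <= eta (mnbhd A e) + e /\ eta A <= mu (mnbhd A e) + e.
Definition dP (mu eta : set T -> R) : R :=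
  inf [set e : R | 0 < e /\ prokhorov_ok mu eta e].

End MetricNotions.

Definition dPm {R : realType} {T : Type} (d : T -> T -> R) : mf d -> mf d -> R :=
  fun m1 m2 => dP d (sval m1) (sval m2).
Arguments dPm {R T} d m1 m2.

Definition isometric {R : realType} {T U : Type} (dT : T -> T -> R)
  (dU : U -> U -> R) (f : T -> U) : Prop :=
  forall x y, dU (f x) (f y) = dT x y.

Definition push {R : realType} {T U : Type} (dU : U -> U -> R) (g : T -> U)
  (mu : set T -> R) : set U -> R :=
  fun A => if pselect (mborel dU A) then mu (g @^-1` A) else 0.

(* push2: g_{**} nu = nu o (g_{*})^-1 (on Borel sets of (M_f(U), d_P)) *)
Definition push2 {R : realType} {T U : Type} (dT : T -> T -> R)
  (dU : U -> U -> R) (g : T -> U) (nu : set (mf dT) -> R) : set (mf dU) -> R :=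
  fun B => if pselect (mborel (dPm dU) B)
           then nu [set m : mf dT | exists2 m' : mf dU, B m' &
                                      sval m' = push dU g (sval m)]
           else 0.

Arguments push {R T U} dU g mu _.
Arguments push2 {R T U} dT dU g nu _.
Arguments dP {R T} d mu eta.
Arguments isometric {R T U} dT dU f.

Definition pt {R : realType} (S : set (nat -> R)) := {x : nat -> R | S x}.

Record m2m (R : realType) := M2M {
  m2m_set : set (nat -> R);
  m2m_ne : m2m_set !=set0;
  m2m_r : pt m2m_set -> pt m2m_set -> R;
  m2m_metric : is_metric m2m_r;
  m2m_complete : mcomplete m2m_r;
  m2m_separable : mseparable m2m_r;
  m2m_nu : set (mf m2m_r) -> R;
  m2m_fm : is_fmeasure (dPm m2m_r) m2m_nu }.
Arguments m2m_set {R} m _.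
Arguments m2m_r {R} m _ _.
Arguments m2m_nu {R} m _.

Definition d2GP {R : realType} (X Y : m2m R) : R :=
  inf [set dd : R | exists (Z : Type) (dZ : Z -> Z -> R)
         (iX : pt (m2m_set X) -> Z) (iY : pt (m2m_set Y) -> Z),
         [/\ is_metric dZ, mcomplete dZ, mseparable dZ,
             isometric (m2m_r X) dZ iX /\ isometric (m2m_r Y) dZ iY &
             dd = dP (dPm dZ) (push2 (m2m_r X) dZ iX (m2m_nu X))
                              (push2 (m2m_r Y) dZ iY (m2m_nu Y))]].

(* Main.v *)
Require Import Defs.
From HB Require Import structures.
From mathcomp Require Import all_boot all_order all_algebra.
From mathcomp Require Import all_classical all_reals.
From mathcomp Require Import topology normedtype sequences measure.
From mathcomp Require Import lra zify.
From Stdlib Require Import Eqdep_dec PeanoNat.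
Set Implicit Arguments. Unset Strict Implicit. Unset Printing Implicit Defensive.
Import Order.TTheory GRing.Theory Num.Theory.
Import numFieldNormedType.Exports.
Local Open Scope classical_set_scope.
Local Open Scope ring_scope.
Section Borel.
Context {R : realType} {T : Type} (d : T -> T -> R).

Lemma mopen_borel A : mopen d A -> mborel d A.
Proof. by move=> oA; apply: sub_sigma_algebra. Qed.

Lemma borel_setC A : mborel d A -> mborel d (~` A).
Proof. by move=> bA; rewrite -setTD; apply: sigma_algebraCD. Qed.

Lemma borel_bigcup (F : nat -> set T) : (forall n, mborel d (F n)) -> mborel d (\bigcup_n F n).
Proof. by move=> bF; apply: sigma_algebra_bigcup. Qed.

Lemma borel_set0 : mborel d set0.
Proof. exact: sigma_algebra0. Qed.

Lemma borel_setT : mborel d setT.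
Proof. by rewrite -setC0; apply: borel_setC; apply: borel_set0. Qed.

Lemma borel_setU A B : mborel d A -> mborel d B -> mborel d (A `|` B).
Proof.
move=> bA bB; rewrite -bigcup2E; apply: borel_bigcup => -[|[|n]] //=.
exact: borel_set0.
Qed.

Lemma borel_setI A B : mborel d A -> mborel d B -> mborel d (A `&` B).
Proof.
move=> bA bB; rewrite -[A `&` B]setCK setCI; apply: borel_setC.
by apply: borel_setU; apply: borel_setC.
Qed.

Lemma closed_borel A : mclosed d A -> mborel d A.
Proof. by move=> cA; rewrite -[A]setCK; apply: borel_setC; apply: mopen_borel. Qed.

Hypothesis dtri : forall x y z, d x z <= d x y + d y z.

Lemma mnbhd_open A e : mopen d (mnbhd d A e).
Proof.
move=> y [x Ax dxy]; exists (e - d x y); split; first by rewrite subr_gt0.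
move=> z /= dyz; exists x => //.
by apply: (le_lt_trans (dtri x y z)); rewrite -ltrBrDl.
Qed.

Lemma mnbhd_borel A e : mborel d (mnbhd d A e).
Proof. by apply: mopen_borel; apply: mnbhd_open. Qed.

End Borel.

Section FMeasure.
Context {R : realType} {T : Type} (d : T -> T -> R) (mu : set T -> R).
Hypothesis fm : is_fmeasure d mu.

Lemma fm_ge0 A : 0 <= mu A.
Proof.
case: fm => m0 _ mpos _; have [bA|nbA] := pselect (mborel d A).
  exact: mpos.
by rewrite m0.
Qed.

Lemma fm_sum_le (F : nat -> set T) : (forall n, mborel d (F n)) -> trivIset setT F ->
  forall n, \sum_(0 <= i < n) mu (F i) <= mu (\bigcup_n F n).
Proof.
move=> bF tF n; case: fm => _ _ _ /(_ F bF tF) cv.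
have <- : limn (fun n => \sum_(0 <= i < n) mu (F i)) = mu (\bigcup_n F n).
  exact: (cvg_lim (@Rhausdorff R)).
apply: nondecreasing_cvgn_le; last by apply/cvg_ex; eexists; exact: cv.
apply/nondecreasing_seqP => k; rewrite big_nat_recr //= lerDl; exact: fm_ge0.
Qed.

Lemma fm_mono A B : mborel d A -> mborel d B -> A `<=` B -> mu A <= mu B.
Proof.
move=> bA bB AB.
pose F := fun n : nat => match n with 0 => A | 1 => B `&` ~` A | _ => set0 end.
have bF : forall n, mborel d (F n).
  case=> [|[|n]]; rewrite /F //.
    by apply: borel_setI => //; apply: borel_setC.
  exact: borel_set0.
have tF : trivIset setT F.
  move=> i j _ _ [x [Fi Fj]]; move: Fi Fj.
  case: i => [|[|i]]; case: j => [|[|j]] //= Fi Fj;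
  by [case: Fi | case: Fj | case: Fj => _ /(_ Fi) | case: Fi => _ /(_ Fj)].
have UF : \bigcup_n F n = B.
  apply/seteqP; split => [x [[|[|n]]] _ //=|]; first by move/AB.
    by case.
  move=> x Bx; have [Ax|nAx] := pselect (A x); first by exists 0%N.
  by exists 1%N.
have := fm_sum_le bF tF 2; rewrite UF !big_nat_recr //= big_geq // add0r.
move=> h; apply: le_trans h; rewrite lerDl; exact: fm_ge0.
Qed.

Lemma fm_le_total A : mu A <= mu setT.
Proof.
have [bA|nbA] := pselect (mborel d A).
  by apply: fm_mono => //; apply: borel_setT.
case: fm => m0 _ _ _; rewrite m0 //; exact: fm_ge0.
Qed.

End FMeasure.
Lemma sig_eq (A : Type) (P : A -> Prop) (x y : {a | P a}) : sval x = sval y -> x = y.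
Proof.
case: x y => [a pa] [b pb] /= eab; subst b; congr exist; exact: Prop_irrelevance.
Qed.

Section Prokhorov.
Context {R : realType} {T : Type} (d : T -> T -> R).

Lemma dP_le (mu eta : set T -> R) e : 0 < e -> prokhorov_ok d mu eta e -> dP d mu eta <= e.
Proof.
move=> e0 ok; apply: ge_inf; last by split.
by exists 0 => x [/ltW].
Qed.

Lemma pset_ne (mu eta : set T -> R) : is_fmeasure d mu -> is_fmeasure d eta ->
  [set e : R | 0 < e /\ prokhorov_ok d mu eta e] !=set0.
Proof.
move=> fmu feta; exists (mu setT + eta setT + 1); split.
  have := fm_ge0 fmu setT; have := fm_ge0 feta setT; lra.
move=> A _; split.
  have := fm_le_total fmu A; have := fm_ge0 feta (mnbhd d A (mu setT + eta setT + 1)).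
  have := fm_ge0 feta setT; lra.
have := fm_le_total feta A; have := fm_ge0 fmu (mnbhd d A (mu setT + eta setT + 1)).
have := fm_ge0 fmu setT; lra.
Qed.

Lemma dP_lt_ex (mu eta : set T -> R) eps : is_fmeasure d mu -> is_fmeasure d eta ->
  dP d mu eta < eps -> exists e, [/\ 0 < e, prokhorov_ok d mu eta e & e < eps].
Proof.
move=> fmu feta /(inf_lt (pset_ne fmu feta)) [e [e0 ok] lt]; by exists e.
Qed.

Lemma dP_ge0 (mu eta : set T -> R) : is_fmeasure d mu -> is_fmeasure d eta ->
  0 <= dP d mu eta.
Proof.
move=> fmu feta; apply: lb_le_inf; first exact: pset_ne.
by move=> x [/ltW].
Qed.

Hypothesis d0 : forall x, d x x = 0.
Hypothesis dsym : forall x y, d x y = d y x.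
Hypothesis dtri : forall x y z, d x z <= d x y + d y z.

Definition mcl (A : set T) : set T :=
  [set y | forall δ, 0 < δ -> exists2 x, A x & d x y < δ].

Lemma mcl_closed A : mclosed d (mcl A).
Proof.
move=> y /= ny.
have [δ [δ0 hδ]] : exists δ, 0 < δ /\ forall x, A x -> δ <= d x y.
  apply: contrapT => hn; apply: ny => δ δ0.
  apply: contrapT => hx; apply: hn; exists δ; split => // x Ax.
  rewrite leNgt; apply/negP => lt; apply: hx; by exists x.
exists (δ / 2); split; first by lra.
move=> z /= dyz clz; have h2 : 0 < δ / 2 by lra.
have [x Ax dxz] := clz (δ / 2) h2; rewrite /mball /= in dyz.
have := hδ x Ax; have := dtri x z y; rewrite (dsym z y); lra.
Qed.

Lemma mcl_sub A : A `<=` mcl A.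
Proof. by move=> x Ax δ δ0; exists x => //; rewrite d0. Qed.

Lemma mcl_nbhd A e1 e2 : mnbhd d (mcl (mnbhd d A e1)) e2 `<=` mnbhd d A (e1 + e2).
Proof.
move=> z [y cly dyz].
have hp : 0 < e2 - d y z by rewrite subr_gt0.
have [w [x Ax dxw] dwy] := cly (e2 - d y z) hp.
exists x => //; have := dtri x w z; have := dtri w y z; lra.
Qed.

Lemma ok_tri (mu eta la : set T -> R) e1 e2 :
  is_fmeasure d mu -> is_fmeasure d eta -> is_fmeasure d la ->
  prokhorov_ok d mu eta e1 -> prokhorov_ok d eta la e2 ->
  prokhorov_ok d mu la (e1 + e2).
Proof.
move=> fmu feta fla ok1 ok2 A cA; split.
  have [h1 _] := ok1 A cA.
  have h2 : eta (mnbhd d A e1) <= eta (mcl (mnbhd d A e1)).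
    apply: (fm_mono feta) => //; [exact: mnbhd_borel|apply: closed_borel; exact: mcl_closed|exact: mcl_sub].
  have [h3 _] := ok2 _ (@mcl_closed (mnbhd d A e1)).
  have h4 : la (mnbhd d (mcl (mnbhd d A e1)) e2) <= la (mnbhd d A (e1 + e2)).
    apply: (fm_mono fla) => //; [exact: mnbhd_borel|exact: mnbhd_borel|exact: mcl_nbhd].
  lra.
have [_ h1] := ok2 A cA.
have h2 : eta (mnbhd d A e2) <= eta (mcl (mnbhd d A e2)).
  apply: (fm_mono feta) => //; [exact: mnbhd_borel|apply: closed_borel; exact: mcl_closed|exact: mcl_sub].
have [_ h3] := ok1 _ (@mcl_closed (mnbhd d A e2)).
have h4 : mu (mnbhd d (mcl (mnbhd d A e2)) e1) <= mu (mnbhd d A (e1 + e2)).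
  apply: (fm_mono fmu) => //; [exact: mnbhd_borel|exact: mnbhd_borel|rewrite addrC; exact: mcl_nbhd].
lra.
Qed.

Lemma dP_tri (mu eta la : set T -> R) :
  is_fmeasure d mu -> is_fmeasure d eta -> is_fmeasure d la ->
  dP d mu la <= dP d mu eta + dP d eta la.
Proof.
move=> fmu feta fla; apply/ler_addgt0Pr => e e0.
have [e1 [e10 ok1 lt1]] :
    exists e1, [/\ 0 < e1, prokhorov_ok d mu eta e1 & e1 < dP d mu eta + e / 2].
  by apply: dP_lt_ex => //; lra.
have [e2 [e20 ok2 lt2]] :
    exists e2, [/\ 0 < e2, prokhorov_ok d eta la e2 & e2 < dP d eta la + e / 2].
  by apply: dP_lt_ex => //; lra.
have := dP_le (addr_gt0 e10 e20) (ok_tri fmu feta fla ok1 ok2); lra.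
Qed.

End Prokhorov.
Section Transfer.
Context {R : realType} {T U : Type} (dT : T -> T -> R) (dU : U -> U -> R) (f : T -> U).
Hypothesis lip : forall a b, dU (f a) (f b) <= dT a b.

Lemma pre_open A : mopen dU A -> mopen dT (f @^-1` A).
Proof.
move=> oA x Afx; have [e [e0 sub]] := oA _ Afx; exists e; split => // y /= dxy.
by apply: sub; rewrite /mball /=; apply: le_lt_trans dxy.
Qed.

Lemma pre_borel A : mborel dU A -> mborel dT (f @^-1` A).
Proof.
move=> bA; apply: (@smallest_sub _ _ _ [set B | mborel dT (f @^-1` B)]) bA.
  split => /=.
  - by rewrite preimage_set0; apply: borel_set0.
  - by move=> B bB; rewrite setTD -preimage_setC; apply: borel_setC.
  - by move=> F bF; rewrite preimage_bigcup; apply: borel_bigcup.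
by move=> B oB /=; apply: mopen_borel; apply: pre_open.
Qed.

Lemma pre_closed A : mclosed dU A -> mclosed dT (f @^-1` A).
Proof. by move=> cA; rewrite /mclosed preimage_setC; apply: pre_open. Qed.

Lemma pre_nbhd A e : mnbhd dT (f @^-1` A) e `<=` f @^-1` (mnbhd dU A e).
Proof. by move=> y [x Ax dxy]; exists (f x) => //; apply: le_lt_trans dxy. Qed.

Lemma pushE (mu : set T -> R) A : mborel dU A -> push dU f mu A = mu (f @^-1` A).
Proof. by rewrite /push; case: pselect. Qed.

Lemma push_fmeasure (mu : set T -> R) : is_fmeasure dT mu -> is_fmeasure dU (push dU f mu).
Proof.
move=> fm; have fm' := fm; case: fm' => m0 ms0 mpos madd; split.
- by move=> A nA; rewrite /push; case: pselect.
- by rewrite pushE ?preimage_set0 //; apply: borel_set0.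
- by move=> A bA; rewrite pushE //; apply: mpos; apply: pre_borel.
- move=> F bF tF; rewrite pushE; last exact: borel_bigcup.
  rewrite preimage_bigcup.
  have -> : (fun n => \sum_(0 <= i < n) push dU f mu (F i)) =
            (fun n => \sum_(0 <= i < n) mu (f @^-1` F i)).
    by apply: funext => n; apply: eq_bigr => i _; rewrite pushE.
  apply: madd; first by move=> n; apply: pre_borel.
  move=> i j _ _ [x [Fi Fj]]; apply: tF => //; by exists (f x).
Qed.

Hypothesis triT : forall x y z, dT x z <= dT x y + dT y z.
Hypothesis triU : forall x y z, dU x z <= dU x y + dU y z.

Lemma push_ok (mu eta : set T -> R) e : is_fmeasure dT mu -> is_fmeasure dT eta ->
  prokhorov_ok dT mu eta e -> prokhorov_ok dU (push dU f mu) (push dU f eta) e.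
Proof.
move=> fmu feta ok A cA; have bA := closed_borel cA.
have bN := mnbhd_borel triU A e.
have [h1 h2] := ok _ (pre_closed cA).
rewrite !pushE //; split.
  have : eta (mnbhd dT (f @^-1` A) e) <= eta (f @^-1` mnbhd dU A e).
    apply: (fm_mono feta); [exact: mnbhd_borel|exact: pre_borel|exact: pre_nbhd].
  lra.
have : mu (mnbhd dT (f @^-1` A) e) <= mu (f @^-1` mnbhd dU A e).
  apply: (fm_mono fmu); [exact: mnbhd_borel|exact: pre_borel|exact: pre_nbhd].
lra.
Qed.

Lemma dP_push_le (mu eta : set T -> R) : is_fmeasure dT mu -> is_fmeasure dT eta ->
  dP dU (push dU f mu) (push dU f eta) <= dP dT mu eta.
Proof.
move=> fmu feta; apply: lb_le_inf; first exact: pset_ne.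
by move=> e [e0 ok]; apply: dP_le => //; apply: push_ok.
Qed.

Definition fstar (m : mf dT) : mf dU :=
  exist _ (push dU f (sval m)) (push_fmeasure (svalP m)).

Lemma fstar_lip m1 m2 : dPm dU (fstar m1) (fstar m2) <= dPm dT m1 m2.
Proof. by apply: dP_push_le; apply: svalP. Qed.

Lemma push2E (nu : set (mf dT) -> R) : push2 dT dU f nu = push (dPm dU) fstar nu.
Proof.
apply: funext => B; rewrite /push2 /push; case: pselect => // bB.
congr nu; apply/seteqP; split => m /=.
  by case=> m' Bm' e; have -> : fstar m = m' by apply: sig_eq.
by move=> Bm; exists (fstar m).
Qed.

End Transfer.

Lemma push_comp {R : realType} {T U V : Type} (dU : U -> U -> R) (dV : V -> V -> R)
  (f : T -> U) (g : U -> V) (mu : set T -> R) :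
  (forall a b, dV (g a) (g b) <= dU a b) ->
  push dV g (push dU f mu) = push dV (g \o f) mu.
Proof.
move=> lg; apply: funext => B; rewrite /push; case: (pselect (mborel dV B)) => // bB /=.
by case: pselect => // nb; exfalso; apply: nb; apply: (pre_borel lg bB).
Qed.

Section Assembly.
Context {R : realType} {T U V : Type} (dT : T -> T -> R) (dU : U -> U -> R) (dV : V -> V -> R).
Hypothesis triT : forall x y z, dT x z <= dT x y + dT y z.
Hypothesis triU : forall x y z, dU x z <= dU x y + dU y z.
Hypothesis triV : forall x y z, dV x z <= dV x y + dV y z.

Lemma fstar_comp (a : T -> U) (j : U -> V)
  (la : forall x y, dU (a x) (a y) <= dT x y) (lj : forall x y, dV (j x) (j y) <= dU x y)
  (lja : forall x y, dV ((j \o a) x) ((j \o a) y) <= dT x y) :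
  fstar lja = fstar lj \o fstar la.
Proof.
by apply: funext => m; apply: sig_eq => /=; rewrite push_comp.
Qed.

Lemma push2_comp (a : T -> U) (j : U -> V) (nu : set (mf dT) -> R)
  (la : forall x y, dU (a x) (a y) <= dT x y) (lj : forall x y, dV (j x) (j y) <= dU x y) :
  push2 dT dV (j \o a) nu = push (dPm dV) (fstar lj) (push2 dT dU a nu).
Proof.
have lja : forall x y, dV ((j \o a) x) ((j \o a) y) <= dT x y.
  by move=> x y /=; apply: le_trans (lj _ _) (la _ _).
rewrite (push2E lja) (push2E la) push_comp; last first.
  by move=> m1 m2; apply: fstar_lip.
by rewrite (fstar_comp la lj lja).
Qed.

End Assembly.

Lemma metric_props {R : realType} {T : Type} (d : T -> T -> R) : is_metric d ->
  [/\ forall x, d x x = 0, forall x y, d x y = d y x & forall x y z, d x z <= d x y + d y z].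
Proof. by case=> h1 h2 h3; split => // x; apply/h1. Qed.

Lemma dPm_tri {R : realType} {T : Type} (d : T -> T -> R) : is_metric d ->
  forall m1 m2 m3 : mf d, dPm d m1 m3 <= dPm d m1 m2 + dPm d m2 m3.
Proof.
move=> /metric_props [h0 hs ht] m1 m2 m3; apply: dP_tri => //; apply: svalP.
Qed.

Lemma level2 {R : realType} {T1 T2 U V : Type} (d1 : T1 -> T1 -> R) (d2 : T2 -> T2 -> R)
  (dU : U -> U -> R) (dV : V -> V -> R) (a : T1 -> U) (b : T2 -> U) (j : U -> V)
  (nu1 : set (mf d1) -> R) (nu2 : set (mf d2) -> R) (eps : R) :
  is_metric d1 -> is_metric d2 -> is_metric dU -> is_metric dV ->
  is_fmeasure (dPm d1) nu1 -> is_fmeasure (dPm d2) nu2 ->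
  (forall x y, dU (a x) (a y) <= d1 x y) -> (forall x y, dU (b x) (b y) <= d2 x y) ->
  (forall x y, dV (j x) (j y) <= dU x y) ->
  dP (dPm dU) (push2 d1 dU a nu1) (push2 d2 dU b nu2) < eps ->
  dP (dPm dV) (push2 d1 dV (j \o a) nu1) (push2 d2 dV (j \o b) nu2) < eps.
Proof.
move=> m1 m2 mU mV f1 f2 la lb lj H.
have [_ _ t1] := metric_props m1; have [_ _ t2] := metric_props m2.
have [_ _ tU] := metric_props mU; have [_ _ tV] := metric_props mV.
rewrite (push2_comp tU tV nu1 la lj) (push2_comp tU tV nu2 lb lj).
apply: le_lt_trans H.
apply: (dP_push_le (fstar_lip lj tU tV) (dPm_tri mU) (dPm_tri mV)).
- by rewrite (push2E la); apply: (push_fmeasure (fstar_lip la t1 tU) f1).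
- by rewrite (push2E lb); apply: (push_fmeasure (fstar_lip lb t2 tU) f2).
Qed.
Lemma real_cauchy {R : realType} (u : nat -> R) :
  (forall e, 0 < e -> exists N, forall m n, (N <= m)%N -> (N <= n)%N -> `|u m - u n| < e) ->
  exists l, forall e, 0 < e -> exists N, forall n, (N <= n)%N -> `|u n - l| < e.
Proof.
move=> hc.
have : cauchy (u @ \oo).
  apply: cauchy_exP => e e0; have [N hN] := hc e e0; exists (u N).
  exists N => // n /= Nn; rewrite /ball /=; exact: hN.
move/cauchy_cvgP => cv; exists (lim (u @ \oo)) => e e0.
have := (cvgrPdist_lt _ _).1 cv e e0; case=> N _ hN; exists N => n Nn.
by rewrite distrC; apply: hN.
Qed.

Lemma dist3 {R : realType} (a b c d : R) : `|a - d| <= `|a - b| + `|b - c| + `|c - d|.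
Proof.
apply: le_trans (ler_distD b a d) _; rewrite -addrA lerD2l; exact: ler_distD.
Qed.

Section Completion.
Context {R : realType} {G : Type} (rho : G -> G -> R) (g0 : G).
Hypothesis r0 : forall x, rho x x = 0.
Hypothesis rs : forall x y, rho x y = rho y x.
Hypothesis rt : forall x y z, rho x z <= rho x y + rho y z.

Lemma rho_ge0 x y : 0 <= rho x y.
Proof. have := rt x y x; rewrite r0 (rs y x); lra. Qed.

Lemma rho_lip a b g : `|rho a g - rho b g| <= rho a b.
Proof.
have := rt a b g; have := rt b a g; rewrite (rs b a) => h1 h2.
rewrite ler_norml; apply/andP; split; lra.
Qed.

Definition approx (f : G -> R) := forall e, 0 < e -> exists a, forall g, `|f g - rho a g| <= e.
Definition CZ := {f : G -> R | approx f}.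

Definition ddist (f h : G -> R) : R := sup [set `|f g - h g| | g in [set: G]].

Lemma approx_bnd f h : approx f -> approx h -> exists M, forall g, `|f g - h g| <= M.
Proof.
move=> af ah; have [a ha] := af 1 ltr01; have [b hb] := ah 1 ltr01.
exists (1 + rho a b + 1) => g; apply: le_trans (dist3 _ (rho a g) (rho b g) _) _.
rewrite (distrC (rho b g)); apply: lerD; [apply: lerD|] => //; exact: rho_lip.
Qed.

Lemma ddist_ub f h g : approx f -> approx h -> `|f g - h g| <= ddist f h.
Proof.
move=> af ah; have [M hM] := approx_bnd af ah; apply: ub_le_sup.
  by exists M => _ [x _ <-].
by exists g.
Qed.

Lemma ddist_le f h M : (forall g, `|f g - h g| <= M) -> ddist f h <= M.
Proof.
move=> hM; apply: ge_sup; first by exists `|f g0 - h g0|, g0.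
by move=> _ [x _ <-].
Qed.

Definition cdist (x y : CZ) : R := ddist (sval x) (sval y).

Lemma cdist_ub (x y : CZ) g : `|sval x g - sval y g| <= cdist x y.
Proof. by apply: ddist_ub; apply: svalP. Qed.

Lemma cdist_metric : is_metric cdist.
Proof.
split.
- move=> x y; split => [h|->].
    apply: sig_eq; apply: funext => g; apply/eqP; rewrite -subr_eq0 -normr_eq0.
    by rewrite eq_le normr_ge0 andbT -h cdist_ub.
  apply/eqP; rewrite eq_le; apply/andP; split.
    by apply: ddist_le => g; rewrite subrr normr0.
  by have := cdist_ub y y g0; apply: le_trans.
- move=> x y; apply/eqP; rewrite eq_le; apply/andP; split; apply: ddist_le => g;
    by rewrite distrC cdist_ub.
- move=> x y z; apply: ddist_le => g; apply: le_trans (ler_distD (sval y g) _ _) _.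
  by apply: lerD; apply: cdist_ub.
Qed.

Lemma approx_rho a : approx (rho a).
Proof. by move=> e e0; exists a => g; rewrite subrr normr0 ltW. Qed.

Definition J (a : G) : CZ := exist _ (rho a) (approx_rho a).

Lemma cdist_J a b : cdist (J a) (J b) = rho a b.
Proof.
apply/eqP; rewrite eq_le; apply/andP; split.
  by apply: ddist_le => g; apply: rho_lip.
by have := cdist_ub (J a) (J b) b; rewrite /= r0 subr0 ger0_norm // rho_ge0.
Qed.

Lemma cdist_complete : mcomplete cdist.
Proof.
move=> u hu.
have hc : forall g, exists l, forall e, 0 < e -> exists N, forall n, (N <= n)%N ->
    `|sval (u n) g - l| < e.
  move=> g; apply: real_cauchy => e e0; have [N hN] := hu e e0; exists N => m n Nm Nn.
  by apply: le_lt_trans (hN m n Nm Nn); apply: cdist_ub.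
have [F hF] := boolp.choice hc.
have unif : forall e, 0 < e -> exists N, forall m g, (N <= m)%N -> `|sval (u m) g - F g| <= e.
  move=> e e0; have [N hN] := hu e e0; exists N => m g Nm.
  apply/ler_addgt0Pr => δ δ0; have [K hK] := hF g δ δ0.
  have h1 := hN m (maxn N K) Nm (leq_maxl N K).
  have h2 := hK (maxn N K) (leq_maxr N K).
  have h3 := cdist_ub (u m) (u (maxn N K)) g.
  have := ler_distD (sval (u (maxn N K)) g) (sval (u m) g) (F g); lra.
have aF : approx F.
  move=> e e0; have e2 : 0 < e / 2 by lra.
  have [N hN] := unif _ e2; have [a ha] := svalP (u N) _ e2; exists a => g.
  apply: le_trans (ler_distD (sval (u N) g) _ _) _.
  have := hN N g (leqnn N); have := ha g; rewrite distrC; lra.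
exists (exist _ F aF) => e e0; have e2 : 0 < e / 2 by lra.
have [N hN] := unif _ e2; exists N => n Nn.
have : cdist (u n) (exist _ F aF) <= e / 2 by apply: ddist_le => g; apply: hN.
lra.
Qed.

Hypothesis sep : exists D : set G, countable D /\
  forall x e, 0 < e -> exists2 y, D y & rho x y < e.

Lemma cdist_separable : mseparable cdist.
Proof.
case: sep => D [cD dD]; exists (J @` D); split.
  by apply: card_le_trans cD; apply: card_image_le.
move=> x e e0; have e3 : 0 < e / 3 by lra.
have [a ha] := svalP x _ e3; have [y Dy hy] := dD a _ e3.
exists (J y); first by exists y.
have : cdist x (J y) <= e / 3 + rho a y.
  apply: ddist_le => g /=; apply: le_trans (ler_distD (rho a g) _ _) _.
  by apply: lerD => //; apply: rho_lip.
lra.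
Qed.

End Completion.

Lemma completion_exists {R : realType} {G : Type} (rho : G -> G -> R) (g0 : G) :
  (forall x, rho x x = 0) -> (forall x y, rho x y = rho y x) ->
  (forall x y z, rho x z <= rho x y + rho y z) ->
  (exists D : set G, countable D /\ forall x e, 0 < e -> exists2 y, D y & rho x y < e) ->
  exists (Z : Type) (rZ : Z -> Z -> R) (JJ : G -> Z),
    [/\ is_metric rZ, mcomplete rZ, mseparable rZ & forall a b, rZ (JJ a) (JJ b) = rho a b].
Proof.
move=> r0 rs rt sep; exists (CZ rho), (@cdist R G rho), (@J R G rho).
split.
- exact: cdist_metric.
- exact: cdist_complete.
- exact: cdist_separable.
- exact: cdist_J.
Qed.
Local Unset Implicit Arguments.
Section Glue.
Context {R : realType} (Z : nat -> Type) (d : forall n, Z n -> Z n -> R)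
  (Xt : nat -> Type) (r : forall n, Xt n -> Xt n -> R)
  (al : forall n, Xt n -> Z n) (be : forall n, Xt n.+1 -> Z n) (x0 : forall n, Xt n).
Hypothesis d0 : forall n x, d n x x = 0.
Hypothesis ds : forall n x y, d n x y = d n y x.
Hypothesis dt : forall n x y z, d n x z <= d n x y + d n y z.
Hypothesis alI : forall n x y, d n (al n x) (al n y) = r n x y.
Hypothesis beI : forall n x y, d n (be n x) (be n y) = r n.+1 x y.
Local Set Implicit Arguments.

Definition GG := {n : nat & Z n}.

Inductive step : GG -> GG -> R -> Prop :=
| st_in n (a b : Z n) : step (existT Z n a) (existT Z n b) (d n a b)
| st_up n (x : Xt n.+1) : step (existT Z n (be n x)) (existT Z n.+1 (al n.+1 x)) 0
| st_dn n (x : Xt n.+1) : step (existT Z n.+1 (al n.+1 x)) (existT Z n (be n x)) 0.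

Inductive chain : nat -> GG -> GG -> R -> Prop :=
| ch0 p : chain 0 p p 0
| chS k p q s c1 c2 : step p q c1 -> chain k q s c2 -> chain k.+1 p s (c1 + c2).

Lemma sigT_eq n (a b : Z n) : existT Z n a = existT Z n b -> a = b.
Proof. exact: (inj_pair2_eq_dec _ Nat.eq_dec). Qed.

Lemma d_ge0 n x y : 0 <= d n x y.
Proof. have := dt n x y x; rewrite d0 (ds n y x); lra. Qed.

Lemma step_ge0 p q c : step p q c -> 0 <= c.
Proof. by case=> // n a b; apply: d_ge0. Qed.

Lemma chain_ge0 k p q c : chain k p q c -> 0 <= c.
Proof.
elim=> // {}k {}p {}q s c1 c2 st _ h; have := step_ge0 st; lra.
Qed.

Lemma chain_eq k k' p q c c' : chain k p q c -> k = k' -> c = c' -> chain k' p q c'.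
Proof. by move=> ch <- <-. Qed.

Lemma chain1 p q c : step p q c -> chain 1 p q c.
Proof. by move=> st; apply: (chain_eq (chS st (ch0 q))) => //; rewrite addr0. Qed.

Lemma chain_cat k1 k2 p q s c1 c2 : chain k1 p q c1 -> chain k2 q s c2 ->
  chain (k1 + k2) p s (c1 + c2).
Proof.
elim=> [p' | k p' q' s' a1 a2 st ch IH] ch2.
  by apply: (chain_eq ch2) => //; rewrite add0r.
by apply: (chain_eq (chS st (IH ch2))) => //; rewrite addrA.
Qed.

Lemma step_rev p q c : step p q c -> step q p c.
Proof.
case=> [n a b|n x|n x]; last by apply: st_up.
  by rewrite ds; apply: st_in.
by apply: st_dn.
Qed.

Lemma chain_rev k p q c : chain k p q c -> chain k q p c.
Proof.
elim=> [p'|k' p' q' s' c1 c2 st ch IH]; first exact: ch0.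
apply: (chain_eq (chain_cat IH (chain1 (step_rev st)))); first by rewrite addn1.
by rewrite addrC.
Qed.

Definition lev (p : GG) := projT1 p.

Lemma step_dn_inv n p q c : step p q c -> (n.+1 <= lev p)%N -> (lev q <= n)%N ->
  exists x, [/\ p = existT Z n.+1 (al n.+1 x), q = existT Z n (be n x) & c = 0].
Proof.
case=> [m a b|m x|m x] /= h1 h2.
- exfalso; lia.
- exfalso; lia.
- have e : m = n by lia.
  by subst m; exists x.
Qed.

Lemma step_up_inv n p q c : step p q c -> (lev p <= n)%N -> (n.+1 <= lev q)%N ->
  exists x, [/\ p = existT Z n (be n x), q = existT Z n.+1 (al n.+1 x) & c = 0].
Proof.
case=> [m a b|m x|m x] /= h1 h2.
- exfalso; lia.
- have e : m = n by lia.
  by subst m; exists x.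
- exfalso; lia.
Qed.

Lemma split_dn n k p s c : chain k p s c -> (n.+1 <= lev p)%N -> (lev s <= n)%N ->
  exists k1 k2 c1 c2 x, [/\ (k1 < k)%N, (k2 < k)%N,
    chain k1 p (existT Z n.+1 (al n.+1 x)) c1,
    chain k2 (existT Z n (be n x)) s c2 & c = c1 + c2].
Proof.
elim=> [p' h1 h2|k' p' q' s' c1 c2 st ch IH h1 h2].
  exfalso; lia.
have [hq|hq] := leqP n.+1 (lev q').
  have [k1 [k2 [a1 [a2 [x [lt1 lt2 ch1 ch2 ->]]]]]] := IH hq h2.
  exists k1.+1, k2, (c1 + a1), a2, x; split => //.
  - exact: ltnW.
  - exact: chS st ch1.
  - by rewrite addrA.
have [x [ep eq ec]] := step_dn_inv st h1 (hq : (lev q' <= n)%N).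
subst p' q' c1; exists 0%N, k', 0, c2, x; split => //.
exact: ch0.
Qed.

Lemma split_up n k p s c : chain k p s c -> (lev p <= n)%N -> (n.+1 <= lev s)%N ->
  exists k1 k2 c1 c2 x, [/\ (k1 < k)%N, (k2 < k)%N,
    chain k1 p (existT Z n (be n x)) c1,
    chain k2 (existT Z n.+1 (al n.+1 x)) s c2 & c = c1 + c2].
Proof.
elim=> [p' h1 h2|k' p' q' s' c1 c2 st ch IH h1 h2].
  exfalso; lia.
have [hq|hq] := leqP (lev q') n.
  have [k1 [k2 [a1 [a2 [x [lt1 lt2 ch1 ch2 ->]]]]]] := IH hq h2.
  exists k1.+1, k2, (c1 + a1), a2, x; split => //.
  - exact: ltnW.
  - exact: chS st ch1.
  - by rewrite addrA.
have [x [ep eq ec]] := step_up_inv st h1 hq.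
subst p' q' c1; exists 0%N, k', 0, c2, x; split => //.
exact: ch0.
Qed.

Lemma chain_inv k p s c : chain k p s c ->
  (k = 0%N /\ p = s /\ c = 0) \/
  exists k' q c1 c2, [/\ k = k'.+1, step p q c1, chain k' q s c2 & c = c1 + c2].
Proof.
case=> [p'|k' p' q' s' c1 c2 st ch]; first by left.
by right; exists k', q', c1, c2.
Qed.

Lemma step_inv p q c : step p q c ->
  (exists n a b, [/\ p = existT Z n a, q = existT Z n b & c = d n a b]) \/
  (exists n x, [/\ p = existT Z n (be n x), q = existT Z n.+1 (al n.+1 x) & c = 0]) \/
  (exists n x, [/\ p = existT Z n.+1 (al n.+1 x), q = existT Z n (be n x) & c = 0]).
Proof.
case=> [n a b|n x|n x]; first by left; exists n, a, b.
  by right; left; exists n, x.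
by right; right; exists n, x.
Qed.

Lemma chain_lb_aux N : forall k, (k < N)%N -> forall n a b c,
  chain k (existT Z n a) (existT Z n b) c -> d n a b <= c.
Proof.
elim: N => [//|N IH] k kN n a b c /chain_inv [[_ [/sigT_eq -> ->]]|].
  by rewrite d0.
move=> [k' [q [c1 [c2 [ek st ch ->]]]]]; subst k.
have k'N : (k' < N)%N by [].
case: (step_inv st) => [[m [a1 [b1 [E1 E2 E3]]]]|[[m [x [E1 E2 E3]]]|[m [x [E1 E2 E3]]]]].
- have enm := f_equal (@projT1 _ _) E1; simpl in enm; subst m.
  move/sigT_eq: E1 => E1; subst a1 q c1.
  have := IH k' k'N _ _ _ _ ch; have := dt n a b1 b; lra.
- have enm := f_equal (@projT1 _ _) E1; simpl in enm; subst m.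
  move/sigT_eq: E1 => E1; subst a q c1.
  have [k1 [k2 [a1 [a2 [x' [lt1 lt2 ch1 ch2 ->]]]]]] := split_dn ch (leqnn _) (leqnn _).
  have h1 := IH k1 (leq_trans lt1 (ltnW k'N)) _ _ _ _ ch1.
  have h2 := IH k2 (leq_trans lt2 (ltnW k'N)) _ _ _ _ ch2.
  rewrite alI -beI in h1; have := dt n (be n x) (be n x') b; lra.
- have enm := f_equal (@projT1 _ _) E1; simpl in enm; subst n.
  move/sigT_eq: E1 => E1; subst a q c1.
  have [k1 [k2 [a1 [a2 [x' [lt1 lt2 ch1 ch2 ->]]]]]] := split_up ch (leqnn _) (leqnn _).
  have h1 := IH k1 (leq_trans lt1 (ltnW k'N)) _ _ _ _ ch1.
  have h2 := IH k2 (leq_trans lt2 (ltnW k'N)) _ _ _ _ ch2.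
  rewrite beI -alI in h1; have := dt m.+1 (al m.+1 x) (al m.+1 x') b; lra.
Qed.

Lemma chain_lb k n a b c : chain k (existT Z n a) (existT Z n b) c -> d n a b <= c.
Proof. exact: (@chain_lb_aux k.+1 k (ltnSn k)). Qed.

Definition b0 : GG := existT Z 0%N (al 0%N (x0 0%N)).

Lemma reach n a : exists k c, chain k b0 (existT Z n a) c.
Proof.
elim: n a => [|n IH] a.
  by exists 1%N, (d 0%N (al 0%N (x0 0%N)) a); apply: chain1; apply: st_in.
have [k [c ch]] := IH (be n (x0 n.+1)).
have ch2 := chS (st_up (x0 n.+1)) (chain1 (st_in (al n.+1 (x0 n.+1)) a)).
by exists (k + 2)%N, (c + (0 + d n.+1 (al n.+1 (x0 n.+1)) a)); apply: chain_cat ch ch2.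
Qed.

Lemma connect p q : exists k c, chain k p q c.
Proof.
case: p => n a; case: q => m b.
have [k1 [c1 ch1]] := reach a; have [k2 [c2 ch2]] := reach b.
by exists (k1 + k2)%N, (c1 + c2); apply: chain_cat (chain_rev ch1) ch2.
Qed.

Definition rho (p q : GG) : R := inf [set c | exists k, chain k p q c].

Lemma rho_le p q k c : chain k p q c -> rho p q <= c.
Proof.
move=> ch; apply: ge_inf; last by exists k.
by exists 0 => x [k' /chain_ge0].
Qed.

Lemma rho_ge p q x : (forall k c, chain k p q c -> x <= c) -> x <= rho p q.
Proof.
move=> h; apply: lb_le_inf; last by move=> c [k ch]; apply: h ch.
by have [k [c ch]] := connect p q; exists c, k.
Qed.

Lemma rho_lt p q e : rho p q < e -> exists k c, chain k p q c /\ c < e.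
Proof.
have ne : [set c | exists k, chain k p q c] !=set0.
  by have [k [c ch]] := connect p q; exists c, k.
by move/(inf_lt ne) => [c [k ch] lt]; exists k, c.
Qed.

Lemma rho0 p : rho p p = 0.
Proof.
apply/eqP; rewrite eq_le; apply/andP; split; first exact: rho_le (ch0 p).
by apply: rho_ge => k c /chain_ge0.
Qed.

Lemma rho_sym p q : rho p q = rho q p.
Proof.
apply/eqP; rewrite eq_le; apply/andP; split; apply: rho_ge => k c ch;
  by apply: rho_le (chain_rev ch).
Qed.

Lemma rho_tri p q s : rho p s <= rho p q + rho q s.
Proof.
apply/ler_addgt0Pr => e e0.
have [k1 [c1 [ch1 lt1]]] : exists k c, chain k p q c /\ c < rho p q + e / 2.
  by apply: rho_lt; lra.
have [k2 [c2 [ch2 lt2]]] : exists k c, chain k q s c /\ c < rho q s + e / 2.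
  by apply: rho_lt; lra.
have := rho_le (chain_cat ch1 ch2); lra.
Qed.

Lemma rho_level n a b : rho (existT Z n a) (existT Z n b) = d n a b.
Proof.
apply/eqP; rewrite eq_le; apply/andP; split.
  exact: rho_le (chain1 (st_in a b)).
by apply: rho_ge => k c; apply: chain_lb.
Qed.

Lemma rho_jump n x : rho (existT Z n (be n x)) (existT Z n.+1 (al n.+1 x)) = 0.
Proof.
apply/eqP; rewrite eq_le; apply/andP; split.
  exact: rho_le (chain1 (st_up x)).
by apply: rho_ge => k c /chain_ge0.
Qed.

Local Unset Implicit Arguments.
Hypothesis sepZ : forall n, exists D : set (Z n), countable D /\
  forall x e, 0 < e -> exists2 y, D y & d n x y < e.

Local Set Implicit Arguments.
Lemma rho_sep : exists D : set GG, countable D /\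
  forall x e, 0 < e -> exists2 y, D y & rho x y < e.
Proof.
pose Dn := fun n => proj1_sig (cid (sepZ n)).
have hDn : forall n, countable (Dn n) /\ forall x e, 0 < e -> exists2 y, Dn n y & d n x y < e.
  by move=> n; apply: (proj2_sig (cid (sepZ n))).
exists (\bigcup_(n in [set: nat]) (existT Z n) @` Dn n); split.
  apply: bigcup_countable; first exact: countableP.
  move=> n _; apply: card_le_trans (hDn n).1; exact: card_image_le.
case=> n a e e0; have [y Dy dy] := (hDn n).2 a e e0.
exists (existT Z n y); first by exists n => //; exists y.
by rewrite rho_level.
Qed.

End Glue.
Local Set Implicit Arguments.

Lemma countable_setU {T : Type} (A B : set T) : countable A -> countable B -> countable (A `|` B).
Proof.
move=> cA cB; rewrite -bigcup2E; apply: bigcup_countable; first exact: countableP.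
by move=> [|[|n]] _ //=; apply: countable0.
Qed.

Lemma pt_inhabited {R : realType} (X : m2m R) : pt (m2m_set X).
Proof. have [v Hv] := cid (m2m_ne X); exact: (exist _ v Hv). Qed.

Section SumSpace.
Context {R : realType} (X Y : m2m R).
Local Notation TX := (pt (m2m_set X)).
Local Notation TY := (pt (m2m_set Y)).
Local Notation rX := (m2m_r X).
Local Notation rY := (m2m_r Y).
Let x0 : TX := pt_inhabited X.
Let y0 : TY := pt_inhabited Y.

Definition srho (p q : TX + TY) : R :=
  match p, q with
  | inl a, inl b => rX a b
  | inr a, inr b => rY a b
  | inl a, inr b => rX a x0 + 1 + rY y0 b
  | inr a, inl b => rX b x0 + 1 + rY y0 a
  end.

Lemma srho_props : [/\ forall x, srho x x = 0, forall x y, srho x y = srho y x &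
  forall x y z, srho x z <= srho x y + srho y z].
Proof.
have [X0 Xs Xt] := metric_props (m2m_metric X).
have [Y0 Ys Yt] := metric_props (m2m_metric Y).
have Xp : forall a b : TX, 0 <= rX a b.
  by move=> a b; have := Xt a b a; rewrite X0 (Xs b a); lra.
have Yp : forall a b : TY, 0 <= rY a b.
  by move=> a b; have := Yt a b a; rewrite Y0 (Ys b a); lra.
split.
- by case=> a /=; [apply: X0|apply: Y0].
- by case=> a; case=> b //=; apply: Xs || apply: Ys.
- case=> a; case=> b; case=> c /=.
  + exact: Xt.
  + have := Xt a b x0; have := Yp y0 c; lra.
  + have := Xt a x0 c; have := Yp y0 b; have := Xs x0 c; lra.
  + have := Yt y0 b c; have := Xp a x0; lra.
  + have := Xt c b x0; have := Yp y0 a; have := Xs c b; lra.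
  + have := Yt a y0 c; have := Ys a y0; have := Xp b x0; lra.
  + have := Yt y0 b a; have := Ys b a; lra.
  + exact: Yt.
Qed.

Lemma srho_sep : exists D : set (TX + TY), countable D /\
  forall x e, 0 < e -> exists2 y, D y & srho x y < e.
Proof.
have [DX [cX dX]] := m2m_separable X; have [DY [cY dY]] := m2m_separable Y.
exists ((@inl TX TY) @` DX `|` (@inr TX TY) @` DY); split.
  apply: countable_setU; apply: card_le_trans (card_image_le _ _) _ => //.
case=> a e e0.
  by have [y Dy h] := dX a e e0; exists (inl y) => //; left; exists y.
by have [y Dy h] := dY a e e0; exists (inr y) => //; right; exists y.
Qed.

Lemma d2GP_ne : [set dd : R | exists (Z : Type) (dZ : Z -> Z -> R)
         (iX : pt (m2m_set X) -> Z) (iY : pt (m2m_set Y) -> Z),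
         [/\ is_metric dZ, mcomplete dZ, mseparable dZ,
             isometric (m2m_r X) dZ iX /\ isometric (m2m_r Y) dZ iY &
             dd = dP (dPm dZ) (push2 (m2m_r X) dZ iX (m2m_nu X))
                              (push2 (m2m_r Y) dZ iY (m2m_nu Y))]] !=set0.
Proof.
have [s0 ss st] := srho_props.
have [Z [rZ [JJ [mZ cZ sZ iJ]]]] := completion_exists (inl x0) s0 ss st srho_sep.
eexists; exists Z, rZ, (JJ \o inl), (JJ \o inr); split => //.
split => a b /=; by rewrite iJ.
Qed.

End SumSpace.

Lemma d2GP_witness {R : realType} (X Y : m2m R) (eps : R) : d2GP X Y < eps ->
  exists (Z : Type) (dZ : Z -> Z -> R)
         (iX : pt (m2m_set X) -> Z) (iY : pt (m2m_set Y) -> Z),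
         [/\ is_metric dZ, mcomplete dZ, mseparable dZ,
             isometric (m2m_r X) dZ iX /\ isometric (m2m_r Y) dZ iY &
             dP (dPm dZ) (push2 (m2m_r X) dZ iX (m2m_nu X))
                              (push2 (m2m_r Y) dZ iY (m2m_nu Y)) < eps].
Proof.
move=> /(inf_lt (d2GP_ne X Y)) [dd [Z [dZ [iX [iY [h1 h2 h3 h4 ->]]]]] lt].
by exists Z, dZ, iX, iY.
Qed.
Lemma main_glue {R : realType} (eps : nat -> R) (X : nat -> m2m R) (Z : nat -> Type)
  (dZ : forall n, Z n -> Z n -> R)
  (al : forall n, pt (m2m_set (X n)) -> Z n) (be : forall n, pt (m2m_set (X n.+1)) -> Z n) :
  (forall n, is_metric (dZ n)) -> (forall n, mseparable (dZ n)) ->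
  (forall n, isometric (m2m_r (X n)) (dZ n) (al n)) ->
  (forall n, isometric (m2m_r (X n.+1)) (dZ n) (be n)) ->
  (forall n, dP (dPm (dZ n)) (push2 (m2m_r (X n)) (dZ n) (al n) (m2m_nu (X n)))
                 (push2 (m2m_r (X n.+1)) (dZ n) (be n) (m2m_nu (X n.+1))) < eps n) ->
  exists (Zc : Type) (rZ : Zc -> Zc -> R)
         (iota : forall n, pt (m2m_set (X n)) -> Zc),
    [/\ is_metric rZ, mcomplete rZ, mseparable rZ,
        (forall n, isometric (m2m_r (X n)) rZ (iota n)) &
        (forall n,
           dP (dPm rZ) (push2 (m2m_r (X n)) rZ (iota n) (m2m_nu (X n)))
                       (push2 (m2m_r (X n.+1)) rZ (iota n.+1) (m2m_nu (X n.+1)))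
           < eps n)].
Proof.
move=> mZ sZ iA iB hP.
have x0 : forall n, pt (m2m_set (X n)) := fun n => pt_inhabited (X n).
have d0 : forall n x, dZ n x x = 0 by move=> n x; have [h _ _] := metric_props (mZ n); apply: h.
have ds : forall n x y, dZ n x y = dZ n y x by move=> n; have [_ h _] := metric_props (mZ n); apply: h.
have dt : forall n x y z, dZ n x z <= dZ n x y + dZ n y z.
  by move=> n; have [_ _ h] := metric_props (mZ n); apply: h.
have alI : forall n x y, dZ n (al n x) (al n y) = m2m_r (X n) x y by move=> n; apply: iA.
have beI : forall n x y, dZ n (be n x) (be n y) = m2m_r (X n.+1) x y by move=> n; apply: iB.
have rs := rho_sep x0 d0 ds dt alI beI sZ.
have [Zc [rZ [JJ [mZc cZc sZc iJ]]]] := completion_exists (b0 al x0)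
  (rho0 al be x0 d0 ds dt) (rho_sym al be x0 d0 ds dt) (rho_tri al be x0 d0 ds dt) rs.
exists Zc, rZ, (fun n x => JJ (existT Z n (al n x))); split => //.
  by move=> n x y; rewrite iJ (rho_level x0 d0 ds dt alI beI) alI.
move=> n.
have eq : (fun x => JJ (existT Z n.+1 (al n.+1 x))) = (fun z => JJ (existT Z n z)) \o be n.
  apply: funext => x /=; case: mZc => h _ _; apply/h.
  by rewrite iJ (rho_sym al be x0 d0 ds dt) (rho_jump al be x0 d0 ds dt).
rewrite eq.
have lA : forall x y, dZ n (al n x) (al n y) <= m2m_r (X n) x y by move=> x y; rewrite alI.
have lB : forall x y, dZ n (be n x) (be n y) <= m2m_r (X n.+1) x y by move=> x y; rewrite beI.
have lJ : forall x y, rZ ((fun z => JJ (existT Z n z)) x) ((fun z => JJ (existT Z n z)) y) <= dZ n x y.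
  by move=> x y; rewrite iJ (rho_level x0 d0 ds dt alI beI).
exact: (level2 (m2m_metric _) (m2m_metric _) (mZ n) mZc (m2m_fm _) (m2m_fm _) lA lB lJ (hP n)).
Qed.

Lemma choice4 {R : realType} (X : nat -> m2m R)
  (P : forall n (Z : Type) (dZ : Z -> Z -> R), (pt (m2m_set (X n)) -> Z) ->
         (pt (m2m_set (X n.+1)) -> Z) -> Prop) :
  (forall n, exists (Z : Type) (dZ : Z -> Z -> R) (a : pt (m2m_set (X n)) -> Z)
                    (b : pt (m2m_set (X n.+1)) -> Z), P n Z dZ a b) ->
  exists (Z : nat -> Type) (dZ : forall n, Z n -> Z n -> R)
         (a : forall n, pt (m2m_set (X n)) -> Z n) (b : forall n, pt (m2m_set (X n.+1)) -> Z n),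
    forall n, P n (Z n) (dZ n) (a n) (b n).
Proof.
move=> W.
pose Zf n := proj1_sig (cid (W n)).
have W1 := fun n => proj2_sig (cid (W n)).
pose dZf n := proj1_sig (cid (W1 n)).
have W2 := fun n => proj2_sig (cid (W1 n)).
pose af n := proj1_sig (cid (W2 n)).
have W3 := fun n => proj2_sig (cid (W2 n)).
pose bf n := proj1_sig (cid (W3 n)).
have W4 := fun n => proj2_sig (cid (W3 n)).
by exists Zf, dZf, af, bf.
Qed.

Theorem mainTheorem15 (R : realType) (eps : nat -> R) (X : nat -> m2m R) :
  (forall n, 0 < eps n) ->
  (forall n, d2GP (X n) (X n.+1) < eps n) ->
  exists (Z : Type) (rZ : Z -> Z -> R)
         (iota : forall n, pt (m2m_set (X n)) -> Z),
    [/\ is_metric rZ, mcomplete rZ, mseparable rZ,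
        (forall n, isometric (m2m_r (X n)) rZ (iota n)) &
        (forall n,
           dP (dPm rZ) (push2 (m2m_r (X n)) rZ (iota n) (m2m_nu (X n)))
                       (push2 (m2m_r (X n.+1)) rZ (iota n.+1) (m2m_nu (X n.+1)))
           < eps n)].
Proof.
move=> heps hd.
have [Z [dZ [al [be H]]]] := choice4 (fun n => d2GP_witness (hd n)).
apply: (@main_glue R eps X Z dZ al be).
- by move=> n; case: (H n).
- by move=> n; case: (H n).
- by move=> n; case: (H n) => _ _ _ [].
- by move=> n; case: (H n) => _ _ _ [].
- by move=> n; case: (H n).
Qed.
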